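(* Let $n\ge1$ and $c\in\mathbb{R}$. For each $L\subsetneqq\Omega_n=\{1,\dots,n\}$ let $\phi_L$ be an arbitrary real-valued function on $F^{n-|L|}$, and let $\phi_{\Omega_n}(\omega)=c$. Define $f$ on the product states of $\mathcal{H}_n=\otimes^n\mathbb{C}^2$ by \[ f(\sigma_J(z))=\sum_{L\subset J}(-1)^{|J-L|}\phi_L(\tau_L(z))\qquad (J\subset\Omega_n,\ z\in F_n). \] Then $\sum_{i=1}^{2^n} f(z_i)=c$ for every unentangled orthonormal basis $z_1,\dots,z_{2^n}$ of $\mathcal{H}_n$.
   Context: One-qubit states are points of $\mathbb{P}^1(\mathbb{C})$, identified with $\mathbb{C}\cup\{\infty\}$ via $(x,y)\mapsto x/y$. Let $\sigma(x,y)=(-\bar y,\bar x)$ on $\mathbb{C}^2$, inducing $\sigma z=-1/\bar z$; $\sigma v$ is the state orthogonal to $v$. $F=\{|z|<1\}\cup\{|z|=1,\operatorname{Im}z>0\}\cup\{1\}$ is a fundamental domain for $\sigma$. Product states of $\mathcal{H}_n$ are $z_1\otimes\cdots\otimes z_n$ with $z_i$ one-qubit states; $F_n$ is the set of those with all $z_i\in F$; $F^m$ is the direct product of $m$ copies of $F$, $F^0=\{\omega\}$. For $J\subset\Omega_n$, $\sigma_J$ applies $\sigma$ in the factors indexed by $J$ and the identity elsewhere; every product state equals $\sigma_J(z)$ for a unique $J$ and $z\in F_n$, so $f$ is well defined. For $z\in F_n$ and $J\ne\Omega_n$ with complement $\{i_1<\dots<i_k\}$, $\tau_J(z)=(z_{i_1},\dots,z_{i_k})$;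 $\tau_{\Omega_n}(z)=\omega$. An unentangled orthonormal basis is an orthonormal basis consisting of product unit vectors. *)

(* Defs.v *)
From HB Require Import structures.
From mathcomp Require Import all_boot all_order all_algebra.
From mathcomp Require Import reals complex.
Set Implicit Arguments. Unset Strict Implicit. Unset Printing Implicit Defensive.
Import Order.TTheory GRing.Theory Num.Theory.
Local Open Scope ring_scope.
Local Open Scope complex_scope.

Section Qubits.
Variable R : realType.
Local Notation C := R[i].

(* A point of P^1(C) = C ∪ {∞}: [Some z] is z, [None] is ∞. *)
Definition point := option C.

(* (x,y) |-> x/y, with y = 0 giving ∞ (vector assumed nonzero). *)
Definition pt_of (v : C * C) : point :=
  if v.2 == 0 then None else Some (v.1 / v.2).

Definition sigma (w : point) : point :=
  match w with
  | None => Some 0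
  | Some z => if z == 0 then None else Some (- (z^*)^-1)
  end.

Definition inF (w : point) : bool :=
  match w with
  | None => false
  | Some z => [|| `|z| < 1, (`|z| == 1) && (0 < 'Im z) | z == 1]
  end.

(* H_n = ⊗^n C^2, realized as functions on bit strings {ffun 'I_n -> bool}. *)
Definition Hn (n : nat) := {ffun {ffun 'I_n -> bool} -> C}.

(* Tensor product v_1 ⊗ ... ⊗ v_n of one-qubit vectors v_k = (x_k, y_k):
   coordinate x for bit [false], y for bit [true]. *)
Definition tensor (n : nat) (v : 'I_n -> C * C) : Hn n :=
  [ffun b : {ffun 'I_n -> bool} => \prod_(k < n) (if b k then (v k).2 else (v k).1)].

Definition hdot (n : nat) (u w : Hn n) : C := \sum_b ((u b)^* * w b).

(* tau_L(z): the entries of z indexed by the complement of L, in increasing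
   order; for L = Omega_n this is the empty sequence (= omega). *)
Definition tau (n : nat) (L : {set 'I_n}) (z : 'I_n -> point) : seq point :=
  [seq z k | k <- enum (~: L)].

(* The function f on product states w_1 ⊗ ... ⊗ w_n (w_k ∈ P^1(C)):
   write w = sigma_J(z) with z ∈ F_n (J = indices where w_k ∉ F, z_k = sigma w_k
   there), and f(w) = sum_{L ⊆ J} (-1)^{|J - L|} phi_L(tau_L(z)). *)
Definition fval (n : nat) (phi : {set 'I_n} -> seq point -> R)
    (w : 'I_n -> point) : R :=
  let J := [set k | ~~ inF (w k)] in
  let z := fun k => if inF (w k) then w k else sigma (w k) in
  \sum_(L : {set 'I_n} | L \subset J) (-1) ^+ #|J :\: L| * phi L (tau L z).

End Qubits.

(* Main.v *)
Require Import Defs.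
From HB Require Import structures.
From mathcomp Require Import all_boot all_order all_algebra.
From mathcomp Require Import reals complex.
From mathcomp Require Import ring lra.
Import Order.TTheory GRing.Theory Num.Theory.
Local Open Scope ring_scope.
Set Implicit Arguments. Unset Strict Implicit. Unset Printing Implicit Defensive.

Section Sig.
Variable R : realType.

Lemma sigmaK : involutive (@sigma R).
Proof.
case=> [z|] /=; last by rewrite eqxx.
have [->|z0] := eqVneq z 0; first by [].
rewrite /= oppr_eq0 invr_eq0 conjC_eq0 (negPf z0).
rewrite rmorphN fmorphV /=. by rewrite (conjCK z) invrN invrK opprK.
Qed.

Definition inFr (a b : R) : bool :=
  [|| a^+2 + b^+2 < 1, (a^+2 + b^+2 == 1) && (0 < b) | (a == 1) && (b == 0)].

Lemma inFr_sig (a b : R) : 0 < a^+2 + b^+2 ->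
  inFr (-(a / (a^+2 + b^+2))) (-(b / (a^+2 + b^+2))) = ~~ inFr a b.
Proof.
move=> s0; set s := a^+2 + b^+2 in s0 *.
have sn0 : s != 0 by rewrite gt_eqF.
have e : (-(a / s))^+2 + (-(b / s))^+2 = s^-1.
  by move: sn0; rewrite /s => sn0; field.
rewrite /inFr e -/s.
have [slt|sgt|seq1] := ltrgtP s 1.
- have -> : s^-1 < 1 = false by apply/negbTE; rewrite -leNgt invf_ge1 // ltW.
  have -> : (s^-1 == 1) = false by apply/negbTE; rewrite invr_eq1 lt_eqF.
  rewrite /=; apply/negbTE/negP => /andP[/eqP h1 /eqP h2].
  move: e; rewrite h1 h2 expr1n expr0n addr0 => /esym /eqP; rewrite invr_eq1.
  by rewrite lt_eqF.
- rewrite invf_lt1 // sgt orTb orFb; rewrite andFb orFb; symmetry; apply/negP => /andP[/eqP h1 /eqP h2].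
  by move: sgt; rewrite /s h1 h2 expr1n expr0n addr0 ltxx.
- rewrite seq1 invr1 ltxx eqxx orFb !mulr1 !andTb orFb oppr_gt0 oppr_eq0.
  have [bn|bp|b0] := ltrgtP b 0.
  + by rewrite !andbF.
  + by rewrite !andbF.
  + rewrite ?andbT /=.
    have a2 : a^+2 = 1 by move: seq1; rewrite /s b0 expr0n addr0.
    have [a1|am1] : a = 1 \/ a = -1.
      have : (a - 1) * (a + 1) = 0 by rewrite mulrDr !mulrBl mul1r mulr1 -expr2 a2; lra.
      by move/eqP; rewrite mulf_eq0 => /orP[/eqP h|/eqP h]; [left|right]; lra.
    + rewrite a1 eqxx /=; apply/negbTE/eqP; lra.
    + rewrite am1 opprK eqxx /=; apply/esym/eqP; lra.
Qed.
Lemma inF_some (a b : R) : inF (Some (a +i* b)%C) = inFr a b.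
Proof.
rewrite /inF /inFr normc_def -complexIm /=.
have s0 : 0 <= a^+2 + b^+2 by rewrite addr_ge0 ?sqr_ge0.
set s := a^+2 + b^+2 in s0 *.
have -> : (Num.sqrt s)%:C%C < 1 = (s < 1).
  rewrite ltcR -{1}sqrtr1 ltr_sqrt //.
have -> : ((Num.sqrt s)%:C%C == 1) = (s == 1).
  rewrite eq_complex /= eqxx andbT.
  apply/eqP/eqP => [h|->]; last by rewrite sqrtr1.
  by rewrite -(sqr_sqrtr s0) h expr1n.
rewrite ltcR eq_complex /=.
by [].
Qed.

Lemma inF_sigma (w : point R) : inF (sigma w) = ~~ inF w.
Proof.
case: w => [z|]; last by rewrite /= normr0 ltr01.
have [->|z0] := eqVneq z 0; first by rewrite /= eqxx /= normr0 ltr01.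
rewrite [sigma _]/= (negPf z0).
case: z z0 => a b z0.
have s0 : 0 < a^+2 + b^+2.
  rewrite lt_def addr_ge0 ?sqr_ge0 // andbT paddr_eq0 ?sqr_ge0 // !sqrf_eq0.
  by move: z0; rewrite eq_complex negb_and.
have -> : - ((a +i* b)%C^*)^-1 = ((-(a / (a^+2 + b^+2))) +i* (-(b / (a^+2 + b^+2))))%C.
  rewrite /=. congr Complex; rewrite ?sqrrN ?opprK ?mulNr //.
by rewrite !inF_some inFr_sig.
Qed.
End Sig.

Section Ridx.
Variables (I : finType) (K : eqType) (key : I -> K).
Definition ridx (i : I) : I := odflt i [pick j | key j == key i].
Lemma ridx_key i : key (ridx i) = key i.
Proof. by rewrite /ridx; case: pickP => [j /eqP|] //=. Qed.
Lemma ridx_eq i j : key i = key j -> ridx i = ridx j.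
Proof.
move=> h; rewrite /ridx h; case: pickP => [//|H].
by have := H j; rewrite eqxx.
Qed.
End Ridx.

Section PerK.
Variable R : realType.
Variable N : nat.
Lemma per_k (om : 'I_N -> bool -> R) (c : 'I_N) (t : bool) :
  (forall j, om j true + om j false = 1) ->
  \sum_(phi : {ffun 'I_N -> bool}) (phi c == t)%:R * \prod_j om j (phi j) = om c t.
Proof.
move=> hom.
pose om' j b := if j == c then (b == t)%:R * om j b else om j b.
transitivity (\sum_(phi : {ffun 'I_N -> bool}) \prod_j om' j (phi j)).
  apply: eq_bigr => phi _.
  rewrite (bigD1 c) //= [in RHS](bigD1 c) //= /om' eqxx mulrA; congr (_ * _).
  by apply: eq_bigr => j /negPf ->.
rewrite -bigA_distr_bigA (bigD1 c) //= [X in _ * X]big1 ?mulr1.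
  by rewrite big_bool /om' eqxx; case: (t) => /=; rewrite ?mul1r ?mul0r ?addr0 ?add0r.
by move=> j /negPf jc; rewrite big_bool /om' jc /= hom.
Qed.
End PerK.

Section Comb.
Variable R : realType.
Variables (n N : nat).
Variable w : 'I_N -> 'I_n -> point R.
Hypothesis hN : N = (2 ^ n)%N.
Hypothesis horth : forall i j : 'I_N, i != j -> exists k, w j k = sigma (w i k).

Definition rep (x : point R) := if inF x then x else sigma x.
Lemma rep_sigma x : rep (sigma x) = rep x.
Proof. by rewrite /rep inF_sigma sigmaK; case: (inF x). Qed.
Lemma rep_bit x : x = if ~~ inF x then sigma (rep x) else rep x.
Proof. by rewrite /rep; case: (inF x) => //=; rewrite sigmaK. Qed.

Definition cidx k i := ridx (fun j => rep (w j k)) i.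
Definition mt (beta : {ffun 'I_n -> {ffun 'I_N -> bool}}) i :=
  [forall k, beta k (cidx k i) == ~~ inF (w i k)].

Lemma mt_uniq beta i j : mt beta i -> mt beta j -> i = j.
Proof.
move=> /forallP hi /forallP hj; apply/eqP/negPn/negP => ij.
have [k hk] := horth ij.
have e : cidx k j = cidx k i by apply: ridx_eq; rewrite hk rep_sigma.
move: (hj k); rewrite e (eqP (hi k)) hk inF_sigma negbK.
by case: (inF (w i k)).
Qed.

Definition om (p : 'I_n -> point R -> R) k j b :=
  p k (if b then sigma (rep (w j k)) else rep (w j k)).
Definition W p (beta : {ffun 'I_n -> {ffun 'I_N -> bool}}) :=
  \prod_k \prod_j om p k j (beta k j).

Section Wp.
Variable p : 'I_n -> point R -> R.
Hypothesis hp : forall k x, p k x + p k (sigma x) = 1.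

Lemma om1 k j : om p k j true + om p k j false = 1.
Proof. by rewrite /om addrC hp. Qed.

Lemma sumW : \sum_beta W p beta = 1.
Proof.
rewrite /W -(bigA_distr_bigA (fun k (phi : {ffun 'I_N -> bool}) =>
  \prod_j om p k j (phi j))) big1 // => k _.
rewrite -(bigA_distr_bigA (fun j (b : bool) => om p k j b)) big1 // => j _.
by rewrite big_bool; exact: om1.
Qed.

Lemma sum_mt i : \sum_beta (mt beta i)%:R * W p beta = \prod_k p k (w i k).
Proof.
transitivity (\sum_(beta : {ffun 'I_n -> {ffun 'I_N -> bool}})
  \prod_k ((beta k (cidx k i) == ~~ inF (w i k))%:R * \prod_j om p k j (beta k j))).
  apply: eq_bigr => beta _; rewrite big_split /=; congr (_ * _).
  rewrite /mt; case: (boolP [forall k, _]) => H.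
    by rewrite big1 // => k _; rewrite (eqP (forallP H k)) eqxx.
  move/forallPn: H => [k Hk]; rewrite (bigD1 k) //= (negPf Hk) mul0r //.
rewrite -(bigA_distr_bigA (fun k (phi : {ffun 'I_N -> bool}) =>
  (phi (cidx k i) == ~~ inF (w i k))%:R * \prod_j om p k j (phi j))) /=.
apply: eq_bigr => k _.
rewrite per_k; last exact: om1.
rewrite /om /cidx (ridx_key (fun j => rep (w j k))).
by rewrite -rep_bit.
Qed.
End Wp.

Lemma mcase beta : (\sum_i (mt beta i)%:R = 1 :> R) \/ (\sum_i (mt beta i)%:R = 0 :> R).
Proof.
  case: (pickP (mt beta)) => [i0 h0|hn]; last by right; rewrite big1 // => i _; rewrite hn.
  left; rewrite (bigD1 i0) //= h0 big1 ?addr0 // => i ii0.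
  case: (boolP (mt beta i)) => // hi.
  by move: ii0; rewrite (mt_uniq hi h0) eqxx.
Qed.

Lemma mcount beta : \sum_i (mt beta i)%:R = 1 :> R.
Proof.
have hcase := mcase beta.
pose p0 (k : 'I_n) (x : point R) : R := 2^-1.
have hp0 : forall k x, p0 k x + p0 k (sigma x) = 1.
  by move=> k x; rewrite /p0; lra.
have Wpos b : 0 < W p0 b.
  by rewrite /W prodr_gt0 // => k _; rewrite prodr_gt0 // => j _; rewrite /om /p0 invr_gt0 ltr0n.
have tot : \sum_b W p0 b * (1 - \sum_i (mt b i)%:R) = 0.
  rewrite (eq_bigr (fun b => W p0 b - \sum_i (mt b i)%:R * W p0 b)); last first.
    by move=> b _; rewrite mulrBr mulr1 mulr_sumr; congr (_ - _); apply: eq_bigr => i _; rewrite mulrC.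
  rewrite sumrB sumW // exchange_big /=.
  rewrite (eq_bigr (fun i => \prod_k p0 k (w i k))); last by move=> i _; rewrite sum_mt.
  rewrite /p0 (eq_bigr (fun _ => (2^-1) ^+ n)); last by move=> i _; rewrite prodr_const card_ord.
  rewrite sumr_const card_ord hN.
  rewrite -(mulr_natl ((2:R)^-1 ^+ n) (2^n)) natrX -exprMn mulfV ?pnatr_eq0 // expr1n.
  by rewrite subrr.
destruct hcase as [h1|h0]; first exact: h1.
have : W p0 beta * (1 - \sum_i (mt beta i)%:R) = 0.
  apply: (psumr_eq0P _ tot) => // b _; apply: mulr_ge0; first exact: ltW.
  by case: (mcase b) => ->; rewrite ?subrr ?subr0 ?ler01.
by rewrite h0 subr0 mulr1 => /eqP; rewrite gt_eqF.
Qed.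

Section P.
Variable p : 'I_n -> point R -> R.
Hypothesis hp : forall k x, p k x + p k (sigma x) = 1.
Lemma lemP : \sum_i \prod_k p k (w i k) = 1.
Proof.
rewrite (eq_bigr (fun i => \sum_beta (mt beta i)%:R * W p beta)); last by move=> i _; rewrite sum_mt.
rewrite exchange_big /=; rewrite -[RHS](sumW hp); apply: eq_bigr => beta _.
by rewrite -mulr_suml mcount mul1r.
Qed.
End P.

Lemma lemG_nz (g : 'I_n -> point R -> R) (s : 'I_n -> R) :
  (forall k x, g k x + g k (sigma x) = s k) -> (forall k, s k != 0) ->
  \sum_i \prod_k g k (w i k) = \prod_k s k.
Proof.
move=> hg hs.
have hp : forall k x, g k x / s k + g k (sigma x) / s k = 1.
  by move=> k x; rewrite -mulrDl hg divff.
rewrite -[RHS]mulr1 -[X in _ * X](lemP hp) mulr_sumr; apply: eq_bigr => i _.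
transitivity (\prod_k (s k * (g k (w i k) / s k))); last by rewrite big_split.
by apply: eq_bigr => k _; rewrite mulrC divfK.
Qed.

Lemma lemG (g : 'I_n -> point R -> R) (s : 'I_n -> R) :
  (forall k x, g k x + g k (sigma x) = s k) ->
  \sum_i \prod_k g k (w i k) = \prod_k s k.
Proof.
move=> hg.
pose t k := 1 + `|s k|.
have tpos k : 0 < t k by rewrite /t ltr_pwDl // normr_ge0.
pose G (f : {ffun 'I_n -> bool}) k x := if f k then g k x + t k else - t k.
pose S (f : {ffun 'I_n -> bool}) k := if f k then s k + t k + t k else - t k - t k.
transitivity (\sum_i \sum_(f : {ffun 'I_n -> bool}) \prod_k G f k (w i k)).
  apply: eq_bigr => i _.
  rewrite -(bigA_distr_bigA (fun k (b : bool) => if b then g k (w i k) + t k else - t k)).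
  apply: eq_bigr => k _; rewrite big_bool /=; ring.
rewrite exchange_big /=.
transitivity (\sum_(f : {ffun 'I_n -> bool}) \prod_k S f k).
  apply: eq_bigr => f _; apply: lemG_nz.
    move=> k x; rewrite /G /S; case: (f k) => //.
    by rewrite addrACA hg addrA.
  move=> k; rewrite /S; case: (f k).
    have h1 := ler_norm (s k).
    have h2 : - s k <= `|s k| by rewrite -normrN ler_norm.
    by apply/eqP; rewrite /t; lra.
  rewrite -opprD oppr_eq0; apply/eqP; have := tpos k; lra.
rewrite -(bigA_distr_bigA (fun k (b : bool) => if b then s k + t k + t k else - t k - t k)).
by apply: eq_bigr => k _; rewrite big_bool /=; ring.
Qed.
End Comb.

Section Q.
Variable R : realType.
Local Notation C := R[i].

Lemma hdot_tensor n (u u' : 'I_n -> C * C) :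
  hdot (tensor u) (tensor u') =
  \prod_k (((u k).1)^* * (u' k).1 + ((u k).2)^* * (u' k).2).
Proof.
rewrite /hdot /tensor.
transitivity (\sum_(b : {ffun 'I_n -> bool}) \prod_k
   ((if b k then (u k).2 else (u k).1)^* * (if b k then (u' k).2 else (u' k).1))).
  apply: eq_bigr => b _; rewrite !ffunE rmorph_prod -big_split /=.
  by [].
rewrite -(bigA_distr_bigA (fun k (c : bool) =>
   (if c then (u k).2 else (u k).1)^* * (if c then (u' k).2 else (u' k).1))).
by apply: eq_bigr => k _; rewrite big_bool /= addrC.
Qed.

Lemma orth_pt (x y x' y' : C) :
  ~~ ((x == 0) && (y == 0)) -> ~~ ((x' == 0) && (y' == 0)) ->
  x^* * x' + y^* * y' = 0 -> pt_of (x', y') = sigma (pt_of (x, y)).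
Proof.
move=> nz nz' h; rewrite /pt_of /=.
have [y0|y0] := eqVneq y 0.
  have x0 : x != 0 by move: nz; rewrite y0 eqxx andbT.
  move: h; rewrite y0 rmorph0 mul0r addr0 => /eqP; rewrite mulf_eq0 conjC_eq0 (negPf x0) /= => /eqP x'0.
  have y'0 : y' != 0 by move: nz'; rewrite x'0 eqxx.
  by rewrite (negPf y'0) x'0 mul0r.
have [x0|x0] := eqVneq x 0.
  move: h; rewrite x0 rmorph0 mul0r add0r => /eqP; rewrite mulf_eq0 conjC_eq0 (negPf y0) /= => /eqP y'0.
  by rewrite y'0 eqxx /= mul0r eqxx.
have y'0 : y' != 0.
  apply/negP => /eqP y'0; move: h; rewrite y'0 mulr0 addr0 => /eqP.
  rewrite mulf_eq0 conjC_eq0 (negPf x0) /= => /eqP x'0.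
  by move: nz'; rewrite x'0 y'0 eqxx.
rewrite (negPf y'0) /= mulf_eq0 invr_eq0 (negPf x0) (negPf y0) /=.
have cx : x^* != 0 by rewrite conjC_eq0.
have cy : y^* != 0 by rewrite conjC_eq0.
have hx' : x' = - (y^* * y') / x^*.
  by apply: (mulIf cx); rewrite divfK // mulrC; apply/eqP; rewrite -addr_eq0 h.
congr Some; rewrite hx' fmorph_div /=.
by field; rewrite cx cy y'0.
Qed.
End Q.

Section Group.
Variable R : realType.
Lemma group_zero (I : finType) (K : eqType) (key : I -> K) (X : I -> R) (F : K -> R) :
  (forall i0, \sum_(i | key i == key i0) X i = 0) ->
  \sum_i X i * F (key i) = 0.
Proof.
move=> h.
rewrite (partition_big (ridx key) xpredT) //=.
apply: big1 => j _.
transitivity (\sum_(i | ridx key i == j) X i * F (key j)).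
  apply: eq_bigr => i /eqP <-; by rewrite ridx_key.
rewrite -mulr_suml.
have [hj|hj] := eqVneq (ridx key j) j.
  rewrite (eq_bigl (fun i => key i == key j)) ?h ?mul0r // => i.
  apply/eqP/eqP => [<-|e]; first by rewrite ridx_key.
  by rewrite (ridx_eq e) hj.
rewrite big_pred0 ?mul0r // => i; apply/negbTE/eqP => e.
by move: hj; rewrite -e (ridx_eq (ridx_key key i)) eqxx.
Qed.
End Group.

Section Main.
Variable R : realType.

Lemma tau_eq n (L : {set 'I_n}) (z1 z2 : 'I_n -> point R) :
  (tau L z1 == tau L z2) = [forall k, (k \notin L) ==> (z1 k == z2 k)].
Proof.
apply/eqP/forallP => [/eq_in_map h k|h].
  by apply/implyP => kL; apply/eqP; apply: h; rewrite mem_enum in_setC.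
apply/eq_in_map => k; rewrite mem_enum in_setC => kL.
by apply/eqP; move/implyP: (h k); apply.
Qed.

Definition eps (x : point R) : R := if inF x then 1 else -1.

Lemma fval_eq n (phi : {set 'I_n} -> seq (point R) -> R) (ww : 'I_n -> point R) :
  fval phi ww = \sum_(L : {set 'I_n}) (\prod_(k < n) (if k \in L then (~~ inF (ww k))%:R else eps (ww k)))
     * phi L (tau L (fun k => rep (ww k))).
Proof.
rewrite /fval big_mkcond /=; apply: eq_bigr => L _.
case: ifP => HL.
  congr (_ * _); rewrite -prodr_const big_mkcond /=; apply: eq_bigr => k _.
  rewrite in_setD in_set /eps.
  case: (boolP (k \in L)) => kL /=.
    by have := subsetP HL k kL; rewrite in_set => ->.
  by case: (inF (ww k)).
have [k kL kJ] : exists2 k, k \in L & k \notin [set k | ~~ inF (ww k)].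
  by apply/subsetPn; rewrite HL.
rewrite (bigD1 k) //= kL.
move: kJ; rewrite in_set negbK => ->.
by rewrite mul0r mul0r.
Qed.

End Main.

Theorem theorem3 (R : realType) (n : nat) (c : R)
    (phi : {set 'I_n} -> seq (point R) -> R)
    (hn : (0 < n)%N)
    (hphi : phi setT [::] = c)
    (v : 'I_(2 ^ n) -> 'I_n -> R[i] * R[i])
    (horth : forall i j : 'I_(2 ^ n),
        hdot (tensor (v i)) (tensor (v j)) = (i == j)%:R) :
  \sum_(i < 2 ^ n) fval phi (fun k => pt_of (v i k)) = c.
Proof.
pose w i k := pt_of (v i k).
have nz : forall i k, ~~ (((v i k).1 == 0) && ((v i k).2 == 0)).
  move=> i k; apply/negP => /andP[/eqP h1 /eqP h2].
  have := horth i i; rewrite eqxx hdot_tensor (bigD1 k) //= h1 h2.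
  rewrite !mulr0 addr0 mul0r => /eqP. by rewrite eq_sym oner_eq0.
have ho : forall i j, i != j -> exists k, w j k = sigma (w i k).
  move=> i j ij; have := horth i j; rewrite (negPf ij) hdot_tensor /= => /eqP.
  move/prodf_eq0 => [k _ /eqP hk]; exists k.
  rewrite /w [v j k]surjective_pairing [v i k]surjective_pairing.
  exact: orth_pt (nz i k) (nz j k) hk.
have G := lemG (w := w) (erefl (2 ^ n)%N) ho.
rewrite (eq_bigr (fun i => \sum_(L : {set 'I_n}) (\prod_(k < n)
     (if k \in L then (~~ inF (w i k))%:R else eps (w i k)))
     * phi L (tau L (fun k => rep (w i k))))); last by move=> i _; rewrite fval_eq.
rewrite exchange_big /= (bigD1 setT) //= [X in _ + X]big1 ?addr0.
  have tT : forall z : 'I_n -> point R, tau setT z = [::].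
    by move=> z; rewrite /tau setCT enum_set0.
  rewrite (eq_bigr (fun i => \prod_(k < n) (~~ inF (w i k))%:R * c)); last first.
    move=> i _; rewrite tT hphi; congr (_ * _); apply: eq_bigr => k _.
    by rewrite in_setT.
  rewrite -mulr_suml (G (fun k x => (~~ inF x)%:R) (fun _ => 1)).
    by rewrite big1 ?mul1r.
  by move=> k x; rewrite inF_sigma negbK; case: (inF x); rewrite /= ?mulr1n ?mulr0n ?addr0 ?add0r.
move=> L LT.
have [k0 k0L] : exists k, k \notin L.
  case: (pickP (fun k => k \notin L)) => [k kL|H]; first by exists k.
  have LT' : L = setT by apply/setP => k; rewrite in_setT; exact: negbFE (H k).
  by move: LT; rewrite LT' eqxx.
apply: (@group_zero R _ _ (fun i => tau L (fun k => rep (w i k)))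
   (fun i => \prod_(k < n) (if k \in L then (~~ inF (w i k))%:R else eps (w i k))) (phi L)).
move=> i0.
rewrite big_mkcond /=.
rewrite (eq_bigr (fun i => \prod_(k < n) (if k \in L then (~~ inF (w i k))%:R
    else (rep (w i k) == rep (w i0 k))%:R * eps (w i k)))); last first.
  move=> i _; rewrite tau_eq.
  case: (boolP [forall k, _]) => H.
    apply: eq_bigr => k _; case: (boolP (k \in L)) => // kL.
    by have := forallP H k; rewrite kL /= => ->; rewrite mul1r.
  move/forallPn: H => [k]; rewrite negb_imply => /andP[kL Hk].
  by rewrite (bigD1 k) //= (negPf kL) (negPf Hk) mul0r mul0r.
rewrite (G (fun k x => if k \in L then (~~ inF x)%:R
    else (rep x == rep (w i0 k))%:R * eps x) (fun k => if k \in L then 1 else 0)).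
  by rewrite (bigD1 k0) //= (negPf k0L) mul0r.
move=> k x; case: (k \in L).
  by rewrite inF_sigma negbK; case: (inF x); rewrite /= ?mulr1n ?mulr0n ?addr0 ?add0r.
rewrite rep_sigma /eps inF_sigma; case: (inF x) => /=; ring.
Qed.
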